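(* Let $\mathcal{A}$ be a Banach algebra such that $\mathrm{rad}(\mathcal{A})=\mathrm{rann}(\mathcal{A})$ and $\mathcal{A}/\mathrm{rad}(\mathcal{A})$ is commutative. Let $T$ be a left multiplier of $\mathcal{A}$. Then $T(\mathcal{A})\subseteq\mathrm{rad}(\mathcal{A})$ if and only if $T$ is spectrally infinitesimal.
   Context: $\mathrm{rad}(\mathcal{A})$ is the Jacobson radical and $\mathrm{rann}(\mathcal{A})=\{c\in\mathcal{A}: ac=0\ \forall a\in\mathcal{A}\}$. A left multiplier is a linear map $T:\mathcal{A}\to\mathcal{A}$ with $T(ab)=T(a)b$ for all $a,b$. $T$ is spectrally infinitesimal if $r(T(a))=0$ for all $a\in\mathcal{A}$, $r$ the spectral radius. *)

(* Defs.v *)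
From mathcomp Require Import all_boot all_algebra.
From mathcomp Require Import all_classical all_reals all_analysis.
From mathcomp.real_closed Require Import complex.
Import numFieldNormedType.Exports.

Set Implicit Arguments.
Unset Strict Implicit.
Unset Printing Implicit Defensive.

Local Open Scope classical_set_scope.
Local Open Scope ring_scope.

Section BanachAlgebra.
Variable R : realType.
Variable V : completeNormedModType R[i].
Variable mul : V -> V -> V.

Definition banach_algebra_mul : Prop :=
  [/\ (forall a b c, mul a (mul b c) = mul (mul a b) c),
      (forall a b c, mul (a + b) c = mul a c + mul b c),
      (forall a b c, mul a (b + c) = mul a b + mul a c),
      (forall (k : R[i]) a b, mul (k *: a) b = k *: mul a b)
    & (forall (k : R[i]) a b, mul a (k *: b) = k *: mul a b)] /\
  (forall a b, `|mul a b| <= `|a| * `|b|).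

(* Quasi-invertibility (invertibility of 1 - a in the unitization). *)
Definition quasi_invertible (a : V) : Prop :=
  exists b : V, a + b - mul a b = 0 /\ a + b - mul b a = 0.

(* Spectrum of a, computed in the unitization A^# = A + C1:
   lambda is in the spectrum iff lambda 1 - a is not invertible in A^#;
   for lambda <> 0 this means lambda^-1 a is not quasi-invertible,
   and 0 always belongs to the spectrum in A^#. *)
Definition spectrum (a : V) : set R[i] :=
  [set lam | lam = 0 \/ ~ quasi_invertible (lam^-1 *: a)].

Definition spectral_radius (a : V) : \bar R :=
  ereal_sup [set (Normc.normc lam)%:E | lam in spectrum a].

Definition left_ideal (L : set V) : Prop :=
  [/\ L 0,
      (forall x y, L x -> L y -> L (x + y)),
      (forall (k : R[i]) x, L x -> L (k *: x))
    & (forall a x, L x -> L (mul a x))].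

Definition modular_left_ideal (L : set V) : Prop :=
  left_ideal L /\ exists u : V, forall a, L (a - mul a u).

Definition maximal_modular_left_ideal (L : set V) : Prop :=
  [/\ modular_left_ideal L, L != setT &
      forall J : set V, left_ideal J -> L `<=` J -> J != setT -> J = L].

(* Jacobson radical: intersection of all maximal modular left ideals
   (= the whole algebra if there are none). *)
Definition jacobson_radical : set V :=
  [set a | forall L, maximal_modular_left_ideal L -> L a].

Definition rann : set V := [set c | forall a, mul a c = 0].

(* A / rad(A) is commutative: all commutators lie in rad(A). *)
Definition quotient_by_rad_commutative : Prop :=
  forall a b, jacobson_radical (mul a b - mul b a).

Definition left_multiplier (T : V -> V) : Prop :=
  [/\ (forall x y, T (x + y) = T x + T y),
      (forall (k : R[i]) x, T (k *: x) = k *: T x)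
    & (forall a b, T (mul a b) = mul (T a) b)].

Definition spectrally_infinitesimal (T : V -> V) : Prop :=
  forall a, spectral_radius (T a) = 0%E.

End BanachAlgebra.

(* Main.v *)
Require Import Defs.
From mathcomp Require Import all_boot all_algebra.
From mathcomp Require Import all_classical all_reals all_analysis.
From mathcomp.real_closed Require Import complex.
Import numFieldNormedType.Exports.
Import GRing.Theory Num.Theory.
Local Open Scope classical_set_scope.
Local Open Scope ring_scope.

Section Aux.
Variables (R : realType) (V : completeNormedModType R[i]) (mul : V -> V -> V).
Hypothesis hA : banach_algebra_mul mul.

Lemma mul0l c : mul 0 c = 0.
Proof.
case: hA => [[_ hD _ _ _] _]; have h := hD 0 0 c; rewrite addr0 in h.
by apply: (addrI (mul 0 c)); rewrite addr0 -h.
Qed.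

Lemma mul0r c : mul c 0 = 0.
Proof.
case: hA => [[_ _ hD _ _] _]; have h := hD c 0 0; rewrite addr0 in h.
by apply: (addrI (mul c 0)); rewrite addr0 -h.
Qed.

Lemma mulNl a c : mul (- a) c = - mul a c.
Proof.
case: hA => [[_ hD _ _ _] _]; apply: (addrI (mul a c)).
by rewrite subrr -hD subrr mul0l.
Qed.

Lemma mulNr a c : mul c (- a) = - mul c a.
Proof.
case: hA => [[_ _ hD _ _] _]; apply: (addrI (mul c a)).
by rewrite subrr -hD subrr mul0r.
Qed.

Lemma mulBl a b c : mul (a - b) c = mul a c - mul b c.
Proof. by case: hA => [[_ hD _ _ _] _]; rewrite hD mulNl. Qed.

Lemma mulBr a b c : mul c (a - b) = mul c a - mul c b.
Proof. by case: hA => [[_ _ hD _ _] _]; rewrite hD mulNr. Qed.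

Lemma qi_swap x y : quasi_invertible mul (mul y x) ->
  exists b, b + mul x y - mul b (mul x y) = 0.
Proof.
case: hA => [[hM hDl hDr _ _] _].
move=> [e [_ He]].
exists (mul x (mul e y) - mul x y).
have H : mul x (mul (e + mul y x - mul e (mul y x)) y) = 0.
  by rewrite [e + _]addrC He mul0l mul0r.
rewrite !mulBl !hDl !mulBr !hDr -!hM in H.
rewrite !mulBl -!hM.
by rewrite subrK opprB addrA.
Qed.
End Aux.

Lemma fwd (R : realType) (V : completeNormedModType R[i])
  (mul : V -> V -> V) (hA : banach_algebra_mul mul)
  (hrad : jacobson_radical mul = rann mul)
  (T : V -> V) (hT : left_multiplier mul T) (hsub : range T `<=` jacobson_radical mul) a :
  spectral_radius mul (T a) = 0%E.
Proof.
have hA' := hA.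
case: hA' => [[hM hDl hDr hSl hSr] _].
case: hT => [TD TZ TM].

have hc : forall x, mul x (T a) = 0.
  have : jacobson_radical mul (T a) by apply: hsub; exists a.
  by rewrite hrad.
have Hspec : spectrum mul (T a) = [set 0].
  apply/seteqP; split => lam //=; last by move=> ->; left.
  case=> [//|nq]; exfalso; apply: nq.
  exists (- (lam^-1 *: T a)); split.
  + by rewrite subrr sub0r (@mulNr _ _ _ hA) hSr hc scaler0 !oppr0.
  + by rewrite subrr sub0r (@mulNl _ _ _ hA) hSr hc scaler0 !oppr0.
by rewrite /spectral_radius Hspec image_set1 Normc.normc0 ereal_sup1.
Qed.

Lemma bwd (R : realType) (V : completeNormedModType R[i])
  (mul : V -> V -> V) (hA : banach_algebra_mul mul)
  (hrad : jacobson_radical mul = rann mul)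
  (T : V -> V) (hT : left_multiplier mul T) (hsi : spectrally_infinitesimal mul T) a L (hL : maximal_modular_left_ideal mul L) : L (T a).
Proof.
have hA' := hA.
case: hA' => [[hM hDl hDr hSl hSr] _].
case: hT => [TD TZ TM].

have qiT : forall b, quasi_invertible mul (T b).
  move=> b; apply: contrapT => nq.
  have : ((Normc.normc (1:R[i]))%:E <= spectral_radius mul (T b))%E.
    apply: ereal_sup_ubound; exists 1 => //; right.
    by rewrite invr1 scale1r.
  by rewrite hsi Normc.normc1 lee_fin ler10.
apply: contrapT => nL.
case: hL => [[[L0 LD LZ LM] [u Lu]] /eqP LT Lmax].
have LN : forall x, L x -> L (- x) by move=> x Lx; rewrite -scaleN1r; apply: LZ.
have Lfull : (forall z, L (mul z u)) -> False.
  move=> H; apply: LT; apply/seteqP; split => // z _.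
  have -> : z = (z - mul z u) + mul z u by rewrite subrK.
  by apply: LD.
have Lall : ~ L u by move=> Luu; apply: Lfull => z; apply: LM.
have [x0 nx0] : exists x0, ~ L (mul x0 (T a)).
  apply: contrapT => H.
  have H' : forall x, L (mul x (T a)).
    by move=> x; apply: contrapT => nx; apply: H; exists x.
  pose J := [set z | forall x, L (mul x z)].
  have Jid : left_ideal mul J.
    split.
    + by move=> x; rewrite (@mul0r _ _ _ hA).
    + by move=> p q Jp Jq x; rewrite hDr; apply: LD.
    + by move=> k p Jp x; rewrite hSr; apply: LZ.
    + by move=> w p Jp x; rewrite hM.
  have LJ : L `<=` J by move=> z Lz x; apply: LM.
  have JT : J != setT.
    apply/eqP => JT; apply: Lfull.
    have : J u by rewrite JT.
    by [].
  have JL := Lmax J Jid LJ JT.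
  by apply: nL; rewrite -JL.
pose K := [set z | exists l x, L l /\ z = l + mul x (T a)].
have Kid : left_ideal mul K.
  split.
  + by exists 0, 0; split => //; rewrite (@mul0l _ _ _ hA) addr0.
  + move=> p q [l1 [x1 [L1 ->]]] [l2 [x2 [L2 ->]]].
    exists (l1 + l2), (x1 + x2); split; first by apply: LD.
    by rewrite hDl addrACA.
  + move=> k p [l1 [x1 [L1 ->]]].
    exists (k *: l1), (k *: x1); split; first by apply: LZ.
    by rewrite hSl scalerDr.
  + move=> w p [l1 [x1 [L1 ->]]].
    exists (mul w l1), (mul w x1); split; first by apply: LM.
    by rewrite hDr hM.
have LK : L `<=` K by move=> z Lz; exists z, 0; split => //; rewrite (@mul0l _ _ _ hA) addr0.
have Ku : K u.
  apply: contrapT => nKu.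
  have KT : K != setT by apply/eqP => KT; apply: nKu; rewrite KT.
  have KL := Lmax K Kid LK KT.
  by apply: nx0; rewrite -KL; exists 0, x0; split => //; rewrite add0r.
case: Ku => l [x [Ll Eu]].
have [b Hb] : exists b, b + mul x (T a) - mul b (mul x (T a)) = 0.
  apply: (@qi_swap _ _ _ hA) => //; rewrite -TM; exact: qiT.
set c := mul x (T a) in Hb Eu.
move/eqP: Hb; rewrite subr_eq0 => /eqP Hb.
have Hc : c = mul b c - b by rewrite -Hb [b + c]addrC addrK.
apply: Lall; rewrite Eu.
have -> : l + c = l + (- mul b l) + - (b - mul b (l + c)).
  rewrite [in LHS]Hc hDr opprB.
  by rewrite -!addrA addKr.
apply: (LD); last by apply: (LN); rewrite -Eu; apply: Lu.
by apply: LD => //; apply: LN; apply: LM.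
Qed.

Theorem theorem5p6 (R : realType) (V : completeNormedModType R[i])
  (mul : V -> V -> V) (hA : banach_algebra_mul mul)
  (hrad : jacobson_radical mul = rann mul)
  (hcomm : quotient_by_rad_commutative mul)
  (T : V -> V) (hT : left_multiplier mul T) :
  (range T `<=` jacobson_radical mul) <-> spectrally_infinitesimal mul T.
Proof.
split.
- by move=> hsub a; exact: (@fwd _ _ _ hA hrad _ hT hsub).
- by move=> hsi _ [a _ <-] L hL; exact: (@bwd _ _ _ hA hrad _ hT hsi).
Qed.
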